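(* Let $k\in\{2,3\}$ and let $D$ be an $m$-colored semicomplete bipartite digraph such that every subdigraph of $D$ isomorphic to $\overrightarrow{C}_4\upuparrows\overrightarrow{C}_4$ is at most $k$-colored. Let $x,y$ be distinct vertices of $D$. If there exists a directed path from $x$ to $y$ using exactly $k$ colors and there is no directed path from $y$ to $x$ using at most $k$ colors, then $d(x,y)\leq 2$.
   Context: A semicomplete bipartite digraph is a digraph whose vertex set is partitioned into two nonempty independent sets such that for any two vertices $u,v$ in different parts at least one of the arcs $(u,v)$, $(v,u)$ is present (both may be present). An $m$-colored digraph is a digraph whose arcs are each assigned one of $m$ colors. A directed path (no repeated vertices) is $j$-colored if its arcs use exactly $j$ distinct colors; it uses at most $k$ colors if it is $j$-colored for some $1\le j\le k$. A subdigraph is at most $k$-colored if its arcs use at most $k$ colors. $\overrightarrow{C}_4\upuparrows\overrightarrow{C}_4$ denotes the digraph on five distinct vertices $a,b,c,d,e$ with arcs $a\to b$, $b\to c$, $c\to d$, $d\to a$, $c\to e$, $e\to a$, i.e. two directed $4$-cycles $(a,b,c,d,a)$ and $(a,b,c,e,a)$ sharing the directed path $a\to b\to c$. $d(x,y)$ denotes the minimum number of arcs of a directed path from $x$ to $y$. *)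

(* Defs.v *)
From mathcomp Require Import all_boot.
Set Implicit Arguments. Unset Strict Implicit. Unset Printing Implicit Defensive.

(* A digraph on a finite vertex type V is given by its arc relation A : rel V.
   An m-coloring assigns to every ordered pair a color in 'I_m; only the
   values on arcs are relevant. *)

Definition semicomplete_bipartite (V : finType) (A : rel V) (part : V -> bool) : Prop :=
  (exists u, part u) /\ (exists v, ~~ part v) /\
  (forall u v, A u v -> part u != part v) /\
  (forall u v, part u != part v -> A u v || A v u).

Definition dipath (V : finType) (A : rel V) (x y : V) (p : seq V) : Prop :=
  path A x p /\ uniq (x :: p) /\ last x p = y.

Definition path_colors (V : finType) (m : nat) (col : V -> V -> 'I_m)
    (x : V) (p : seq V) : seq 'I_m :=
  [seq col uv.1 uv.2 | uv <- zip (x :: p) p].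

Definition ncolors (V : finType) (m : nat) (col : V -> V -> 'I_m)
    (x : V) (p : seq V) : nat :=
  size (undup (path_colors col x p)).

Definition C4C4_at_most_colored (V : finType) (A : rel V) (m : nat)
    (col : V -> V -> 'I_m) (k : nat) : Prop :=
  forall a b c d e : V,
    uniq [:: a; b; c; d; e] ->
    A a b -> A b c -> A c d -> A d a -> A c e -> A e a ->
    size (undup [:: col a b; col b c; col c d; col d a; col c e; col e a]) <= k.

(* Main.v *)
Require Import Defs.
From mathcomp Require Import all_boot.
From Stdlib Require Import Classical.

Lemma size_undup_sub (T : eqType) (s t : seq T) :
  {subset s <= t} -> size (undup s) <= size (undup t).
Proof.
move=> st; apply: uniq_leq_size; first exact: undup_uniq.
by move=> a; rewrite !mem_undup; apply: st.
Qed.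

Lemma size_undup_pos (T : eqType) (a : T) (s : seq T) : 0 < size (undup (a :: s)).
Proof.
have : a \in undup (a :: s) by rewrite mem_undup mem_head.
by case: (undup _).
Qed.

Ltac bsolve irr := repeat (match goal with
  | |- _ /\ _ => split
  | |- is_true (_ && _) => apply/andP; split
  | |- _ => first [done | by rewrite eq_sym | by apply: irr | by rewrite eq_sym; apply: irr]
  end).

Theorem mainTheorem5 (V : finType) (A : rel V) (part : V -> bool)
    (m : nat) (col : V -> V -> 'I_m) (k : nat) (x y : V) :
  (k == 2) || (k == 3) ->
  semicomplete_bipartite A part ->
  C4C4_at_most_colored A col k ->
  x != y ->
  (exists p, dipath A x y p /\ ncolors col x p = k) ->
  ~ (exists q, dipath A y x q /\ 1 <= ncolors col y q <= k) ->
  exists p, dipath A x y p /\ size p <= 2.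
Proof.
move=> hk [_ [_ [Hbip Hsc]]] HC xy [p [[pp [pu pl]] _]] Hno.
have k2 : 2 <= k by case/orP: hk => /eqP ->.
have irr : forall u v, A u v -> u != v.
  by move=> u v /Hbip; apply: contraNneq => ->; rewrite eqxx.
have pneq : forall u v, A u v -> part u != part v by [].
case: (boolP (A x y)) => [axy|naxy].
  by exists [:: y]; rewrite /dipath /= axy inE xy.
apply: NNPP => Hgoal.
have no2 : forall z, A x z -> A z y -> False.
  move=> z axz azy; apply: Hgoal; exists [:: z; y]; split => //.
  rewrite /dipath /= !inE ?negb_or; bsolve irr.
have Hqk : forall q, dipath A y x q -> 1 <= ncolors col y q <= k -> False.
  by move=> q d c; apply: Hno; exists q.
have noback : forall z, A y z -> A z x -> False.
  move=> z ayz azx; apply: (Hqk [:: z; x]).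
    rewrite /dipath /= !inE ?negb_or; bsolve irr.
  rewrite /ncolors /path_colors [map _ _]/= size_undup_pos /=; apply: leq_trans k2; by case: ifP.
have nayx : ~~ A y x.
  apply/negP => ayx; apply: (Hqk [:: x]).
    rewrite /dipath /= !inE ?negb_or; bsolve irr.
  by rewrite /ncolors /path_colors /=; apply: leq_trans k2.
have pxy : part x = part y.
  apply/eqP; apply: contraT => /Hsc; by rewrite (negbTE naxy) (negbTE nayx).
have key : forall n q v, size q <= n -> A x v -> part v != part x ->
    path A v q -> last v q = y ->
    exists o u i, [/\ A x o, part o != part x, ~~ A x i,
                      part i != part x & A o u] /\ A u i /\ part u = part x.
  elim=> [|n IH] [|u [|i q]] v //= sq axv pv.
  - by move=> _ vy; move: pv; rewrite vy pxy eqxx.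
  - by move=> _ vy; move: pv; rewrite vy pxy eqxx.
  - by move=> /andP [avu _] uy; move: avu; rewrite uy => /(no2 _ axv).
  - case/and3P=> avu aui pq lq.
    have pux : part u = part x.
      by move: (pneq _ _ avu) pv; case: (part u); case: (part v); case: (part x).
    have pi : part i != part x by rewrite -pux eq_sym; apply: pneq.
    case: (boolP (A x i)) => [axi|naxi].
      apply: (IH q i) => //; apply: leq_trans (leqnSn _) _; exact: sq.
    by exists v, u, i; split => //; split.
case: p pp pu pl => [|z p] /=.
  by move=> _ _ xy'; move: xy; rewrite xy' eqxx.
case/andP=> axz pp pu pl.
have pzx : part z != part x by rewrite eq_sym; apply: pneq.
have [o [u [i [[axo po naxi pi aou] [aui pu']]]]] :=
  key (size p) p z (leqnn _) axz (pzx) pp pl.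
have aix : A i x.
  by move: (Hsc x i); rewrite eq_sym pi (negbTE naxi) => /(_ isT).
have aiy : A i y.
  move: (Hsc i y); rewrite -pxy pi => /(_ isT) /orP [//|ayi].
  by case: (noback _ ayi aix).
have ayo : A y o.
  move: (Hsc y o); rewrite -pxy eq_sym po => /(_ isT) /orP [//|aoy].
  by case: (no2 _ axo aoy).
have oi : o != i by apply: contraNneq naxi => <-.
have ux : u != x by apply: contraNneq naxi => <-.
have uy : u != y.
  by apply/negP => /eqP uy; move: aou; rewrite uy => /(no2 _ axo).
have un : uniq [:: o; u; i; x; y].
  rewrite /= !inE ?negb_or; bsolve irr.
have Hc := HC o u i x y un aou aui aix axo aiy ayo.
apply: (Hqk [:: o; u; i; x]).
  rewrite /dipath /= !inE ?negb_or; bsolve irr.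
rewrite /ncolors /path_colors [map _ _]/= size_undup_pos andTb.
apply: leq_trans Hc; apply: size_undup_sub.
by move=> c; rewrite !inE => /or4P [] ->; rewrite ?orbT.
Qed.
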